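(* Let $n\in\mathbf{N}$ and $A\subset[n]$ have property P. Define $$B_2=3\cdot\big(A\cap(\tfrac n9,\tfrac n6]\big)\ \cup\ 2\cdot\big(A\cap(\tfrac n6,\tfrac n4]\big)\ \cup\ \tfrac32\cdot\big(A\cap2\mathbf{Z}\cap(\tfrac n4,\tfrac n3]\big)\ \cup\ \big(A\cap(1+2\mathbf{Z})\cap(\tfrac n4,\tfrac n3]\big)\ \cup\ \big(A\cap(\tfrac n3,\tfrac n2]\big)\subset\left(\tfrac n4,\tfrac n2\right],$$ and $B_2^{\mathrm R}=B_2\cap(\frac n3,\frac n2]$. Writing $A_{(\frac23,1]}=A\cap(\frac{2n}{3},n]$, at least one of the following holds: $$2|B_2^{\mathrm R}|+|A_{(\frac23,1]}|\leqslant\frac n3+4,\qquad\text{or}\qquad |B_2|+|A_{(\frac23,1]}|\leqslant\frac n4+4.$$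
   Context: A set $A\subset\mathbf{N}$ has property P if there are no $x,y,z\in A$ (not necessarily distinct $x,y$) with $z<x$, $z<y$ and $z\mid x+y$. Intervals denote sets of integers; $q\cdot X=\{qx:x\in X\}$. *)

(* Defs.v *)
From mathcomp Require Import all_boot.
Set Implicit Arguments. Unset Strict Implicit. Unset Printing Implicit Defensive.

Definition propP (A : pred nat) : Prop :=
  forall x y z, A x -> A y -> A z -> z < x -> z < y -> ~~ (z %| x + y).

(* Number of elements of S lying in [0, n] (all sets considered are in [n]). *)
Definition cardUpTo (n : nat) (S : pred nat) : nat := count S (iota 0 n.+1).

(* B_2 = 3.(A ∩ (n/9, n/6]) ∪ 2.(A ∩ (n/6, n/4]) ∪ (3/2).(A ∩ 2Z ∩ (n/4, n/3])
         ∪ (A ∩ (1+2Z) ∩ (n/4, n/3]) ∪ (A ∩ (n/3, n/2]).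
   Rational bounds are cleared: n/9 < x <-> n < 9x, x <= n/6 <-> 6x <= n, etc. *)
Definition B2 (n : nat) (A : pred nat) : pred nat := fun y =>
  [|| has (fun x => [&& A x, n < 9 * x, 6 * x <= n & y == 3 * x]) (iota 0 n.+1),
      has (fun x => [&& A x, n < 6 * x, 4 * x <= n & y == 2 * x]) (iota 0 n.+1),
      has (fun x => [&& A x, ~~ odd x, n < 4 * x, 3 * x <= n & 2 * y == 3 * x])
          (iota 0 n.+1),
      [&& A y, odd y, n < 4 * y & 3 * y <= n]
    | [&& A y, n < 3 * y & 2 * y <= n]].

Definition B2R (n : nat) (A : pred nat) : pred nat := fun y =>
  [&& B2 n A y, n < 3 * y & 2 * y <= n].

Definition Atop (n : nat) (A : pred nat) : pred nat := fun y =>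
  [&& A y, 2 * n < 3 * y & y <= n].

(* Main.v *)
Require Import Defs.
From mathcomp Require Import all_boot zify.
Set Implicit Arguments. Unset Strict Implicit. Unset Printing Implicit Defensive.

Lemma count_split (a b : pred nat) s :
  count a s = count (fun x => a x && b x) s + count (fun x => a x && ~~ b x) s.
Proof.
elim: s => //= x s ->; case: (a x); case: (b x) => /=; lia.
Qed.

Lemma count_disj (P Q R : pred nat) s :
  (forall x, P x -> R x) -> (forall x, Q x -> R x) -> (forall x, P x -> ~~ Q x) ->
  count P s + count Q s <= count R s.
Proof.
move=> hP hQ hPQ; elim: s => //= x s IH.
case Px: (P x).
- have := hPQ x Px; case: (Q x) => //= _; rewrite (hP x Px) /=; lia.
- case Qx: (Q x) => /=; last lia.
  rewrite (hQ x Qx) /=; lia.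
Qed.

Lemma count_inj (P Q : pred nat) (f : nat -> nat) N K :
  (forall x y, P x -> P y -> f x = f y -> x = y) ->
  (forall x, P x -> x < N -> Q (f x) && (f x < K)) ->
  count P (iota 0 N) <= count Q (iota 0 K).
Proof.
move=> finj fQ; rewrite -!size_filter.
rewrite -(size_map f); apply: uniq_leq_size.
- rewrite map_inj_in_uniq ?filter_uniq ?iota_uniq //.
  move=> x y; rewrite !mem_filter => /andP[Px _] /andP[Py _]; exact: finj.
- move=> z /mapP[x]; rewrite mem_filter mem_iota => /andP[Px /andP[_ xN]] ->.
  have /andP[Qf fK] := fQ x Px xN.
  by rewrite mem_filter Qf mem_iota fK.
Qed.

Lemma count_class (P : pred nat) m lo hi N : 0 < m ->
  (forall x y, P x -> P y -> x %% m = y %% m) ->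
  (forall x, P x -> lo <= x <= hi) ->
  count P (iota 0 N) <= (hi - lo) %/ m + 1.
Proof.
move=> m0 hm hr.
have -> : (hi - lo) %/ m + 1 = count predT (iota 0 ((hi - lo) %/ m + 1))
  by rewrite count_predT size_iota.
apply: (count_inj (f := fun x => (x - lo) %/ m)).
- move=> x y Px Py e.
  have /andP[lx _] := hr x Px; have /andP[ly _] := hr y Py.
  have hxy := hm x y Px Py.
  have e2 : (x - lo) %% m = (y - lo) %% m.
    apply/eqP; rewrite -(eqn_modDr lo) !subnK //; exact/eqP.
  have : x - lo = y - lo by rewrite (divn_eq (x - lo) m) (divn_eq (y - lo) m) e e2.
  lia.
- move=> x Px _ /=; have /andP[lx xh] := hr x Px.
  rewrite addn1 ltnS; apply: leq_div2r; lia.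
Qed.

Lemma sumset (X Y S : pred nat) d N K : 0 < d ->
  (exists x, X x) -> (exists y, Y y) -> (forall y, Y y -> y < N) ->
  (forall x y, X x -> Y y -> [&& d %| x + y, S ((x + y) %/ d) & (x + y) %/ d < K]) ->
  count X (iota 0 N) + count Y (iota 0 N) <= (count S (iota 0 K)).+1.
Proof.
move=> d0 exX exY YN hs.
case: (ex_minnP exX) => m Xm mmin.
have Ybd : forall y, Y y -> y <= N by move=> y /YN /ltnW.
case: (ex_maxnP exY Ybd) => M YM Mmax.
set s1 := [seq (x + M) %/ d | x <- filter X (iota 0 N)].
set s2 := [seq (m + y) %/ d | y <- filter (fun y => Y y && (y != M)) (iota 0 N)].
have eqd : forall a b, d %| a -> d %| b -> a %/ d = b %/ d -> a = b.
  by move=> a b da db e; rewrite -(divnK da) -(divnK db) e.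
have hcY : count Y (iota 0 N) = (count (fun y => Y y && (y != M)) (iota 0 N)).+1.
  rewrite (count_split Y (fun y => y != M)); rewrite -addn1; congr (_ + _).
  have -> : count (fun x => Y x && ~~ (x != M)) (iota 0 N) = count (pred1 M) (iota 0 N).
    apply: eq_count => x /=; rewrite negbK; case: eqP => [->|_]; by rewrite ?andbT ?andbF ?YM.
  have := count_uniq_mem M (iota_uniq 0 N); rewrite mem_iota add0n (YN M YM) /= => <-.
  by apply: eq_count => x.
rewrite hcY addnS ltnS -!size_filter.
have -> : size (filter X (iota 0 N)) + size (filter (fun y => Y y && (y != M)) (iota 0 N))
   = size (s1 ++ s2) by rewrite size_cat !size_map.
apply: uniq_leq_size.
- rewrite cat_uniq; apply/and3P; split.
  + rewrite map_inj_in_uniq ?filter_uniq ?iota_uniq //.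
    move=> x y; rewrite !mem_filter => /andP[Px _] /andP[Py _] e.
    have /and3P[dx _ _] := hs x M Px YM; have /and3P[dy _ _] := hs y M Py YM.
    have := eqd _ _ dx dy e; lia.
  + apply/hasPn => z /mapP[y]; rewrite mem_filter => /andP[/andP[Yy yM] _] ->.
    apply/negP => /mapP[x]; rewrite mem_filter => /andP[Xx _] e.
    have /and3P[dx _ _] := hs x M Xx YM; have /and3P[dy _ _] := hs m y Xm Yy.
    have := eqd _ _ dy dx e. have := mmin x Xx. have := Mmax y Yy. move: yM; case: eqP => //; lia.
  + rewrite map_inj_in_uniq ?filter_uniq ?iota_uniq //.
    move=> x y; rewrite !mem_filter => /andP[/andP[Px _] _] /andP[/andP[Py _] _] e.
    have /and3P[dx _ _] := hs m x Xm Px; have /and3P[dy _ _] := hs m y Xm Py.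
    have := eqd _ _ dx dy e; lia.
- move=> z; rewrite mem_cat => /orP[] /mapP[x]; rewrite mem_filter.
  + move=> /andP[Xx _] ->; have /and3P[_ Sz zK] := hs x M Xx YM.
    by rewrite mem_filter Sz mem_iota zK.
  + move=> /andP[/andP[Yy _] _] ->; have /and3P[_ Sz zK] := hs m x Xm Yy.
    by rewrite mem_filter Sz mem_iota zK.
Qed.


Definition JR n (s : nat) := (n < 3*s) && (2*s <= n).
Definition S4 n A s := JR n s && has (fun t => Atop n A t && Atop n A (4*s - t)) (iota 0 n.+1).
Definition oJL n (s : nat) := [&& odd s, n < 4*s & 3*s <= n].
Definition S6 n A s := oJL n s && has (fun t => Atop n A t && Atop n A (6*s - t)) (iota 0 n.+1).
Definition Lp n A y := B2 n A y && ~~ JR n y.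

Lemma B2_gen n A y : B2 n A y -> exists g, [/\ A g, g %| 2*y & g <= y].
Proof.
case/orP => [/hasP[x _ /and4P[Ax _ _ /eqP->]]|/orP[/hasP[x _ /and4P[Ax _ _ /eqP->]]
  |/orP[/hasP[x _ /and5P[Ax _ _ _ /eqP e]]|/orP[/and4P[Ay _ _ _]|/and3P[Ay _ _]]]]].
- exists x; split => //; last lia. apply/dvdnP; exists 6; lia.
- exists x; split => //; last lia. apply/dvdnP; exists 4; lia.
- exists x; split => //; last lia. by rewrite e dvdn_mull.
- exists y; split => //. by rewrite dvdn_mull.
- exists y; split => //. by rewrite dvdn_mull.
Qed.

Lemma Lp_prop n A y : Lp n A y -> [&& A y, odd y, n < 4*y & 3*y <= n].
Proof.
case/andP; rewrite /JR negb_and -leqNgt -ltnNge.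
case/orP => [/hasP[x _ /and4P[Ax h1 h2 /eqP->]]|/orP[/hasP[x _ /and4P[Ax h1 h2 /eqP->]]
  |/orP[/hasP[x _ /and5P[Ax _ h1 h2 /eqP e]]|/orP[/and4P[Ay oy h1 h2]|/and3P[Ay h1 h2]]]]].
- case/orP; lia.
- case/orP; lia.
- case/orP; lia.
- by rewrite Ay oy h1 h2.
- case/orP; lia.
Qed.

Lemma boundJR n : count (JR n) (iota 0 n.+1) <= (n %/ 2 - (n %/ 3 + 1)) %/ 1 + 1.
Proof.
apply: count_class => //.
- by move=> x y _ _; rewrite !modn1.
- move=> x /andP[h1 h2]; apply/andP; split; lia.
Qed.

Lemma boundoJL n : count (oJL n) (iota 0 n.+1) <= (n %/ 3 - (n %/ 4 + 1)) %/ 2 + 1.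
Proof.
apply: count_class => //.
- by move=> x y /and3P[ox _ _] /and3P[oy _ _]; rewrite !modn2 ox oy.
- move=> x /and3P[_ h1 h2]; apply/andP; split; lia.
Qed.

Lemma boundT n A : count (Atop n A) (iota 0 n.+1) <= (n - ((2 * n) %/ 3 + 1)) %/ 1 + 1.
Proof.
apply: count_class => //.
- by move=> x y _ _; rewrite !modn1.
- move=> x /and3P[_ h1 h2]; apply/andP; split; lia.
Qed.

Lemma boundOL n A :
  (forall x y, Atop n A x && odd x -> Atop n A y && odd y -> x %% 4 = y %% 4) ->
  count (fun t => (Atop n A t && odd t) && (4 * t <= 3 * n)) (iota 0 n.+1)
    <= ((3 * n) %/ 4 - ((2 * n) %/ 3 + 1)) %/ 4 + 1.
Proof.
move=> hsame; apply: count_class => //.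
- by move=> x y /andP[Ox _] /andP[Oy _]; apply: hsame.
- move=> x /andP[/andP[/and3P[_ h1 h2] _] h3]; apply/andP; split; lia.
Qed.

Lemma boundH n A k :
  (forall x y, Atop n A x && odd x -> Atop n A y && odd y -> x %% 4 = y %% 4) ->
  count (fun t => ((Atop n A t && odd t) && ~~ (4 * t <= 3 * n)) && (t %% 3 == k)) (iota 0 n.+1)
    <= (n - ((3 * n) %/ 4 + 1)) %/ 12 + 1.
Proof.
move=> hsame; apply: count_class => //.
- move=> x y /andP[/andP[Ox _] /eqP xk] /andP[/andP[Oy _] /eqP yk].
  have := hsame x y Ox Oy; lia.
- move=> x /andP[/andP[/andP[/and3P[_ h1 h2] _] h3] _]; rewrite -ltnNge in h3.
  apply/andP; split; lia.
Qed.

Lemma arithA n r t JRc s4 E O : r + s4 <= JRc ->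
  JRc <= (n %/ 2 - (n %/ 3 + 1)) %/ 1 + 1 -> t = O + E -> E <= s4 -> O <= s4.+1 ->
  t <= (n - ((2 * n) %/ 3 + 1)) %/ 1 + 1 -> 3 * (2 * r + t) <= n + 12.
Proof. lia. Qed.

Lemma arithB n r l t JRc oJ s4 s6 E O OL OH Hk :
  r + s4 <= JRc -> JRc <= (n %/ 2 - (n %/ 3 + 1)) %/ 1 + 1 ->
  l + s6 <= oJ -> oJ <= (n %/ 3 - (n %/ 4 + 1)) %/ 2 + 1 ->
  t = O + E -> E <= s4 -> O = OL + OH ->
  OL <= ((3 * n) %/ 4 - ((2 * n) %/ 3 + 1)) %/ 4 + 1 ->
  OH <= s6 + Hk + 1 -> Hk <= (n - ((3 * n) %/ 4 + 1)) %/ 12 + 1 ->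
  t <= (n - ((2 * n) %/ 3 + 1)) %/ 1 + 1 ->
  3 * (2 * r + t) <= n + 12 \/ 4 * (r + l + t) <= n + 16.
Proof. lia. Qed.


Theorem mainTheorem14 (n : nat) (A : pred nat) :
  (forall x, A x -> 1 <= x <= n) ->
  propP A ->
  3 * (2 * cardUpTo n (B2R n A) + cardUpTo n (Atop n A)) <= n + 12 \/
  4 * (cardUpTo n (B2 n A) + cardUpTo n (Atop n A)) <= n + 16.
Proof.
move=> hA hP; rewrite /cardUpTo.
set s := iota 0 n.+1.
set T := Atop n A.
have Tin : forall t, T t -> [/\ A t, 2*n < 3*t & t <= n] by move=> t /and3P[].
have memT : forall t, T t -> t \in s.
  by move=> t /Tin[_ _ h]; rewrite mem_iota; lia.
have eB2 : count (B2 n A) s = count (B2R n A) s + count (Lp n A) s.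
  by rewrite (count_split (B2 n A) (JR n)).
have F1 : count (B2R n A) s + count (S4 n A) s <= count (JR n) s.
  apply: count_disj.
  - by move=> y /and3P[_ h1 h2]; rewrite /JR h1 h2.
  - by move=> y /andP[].
  - move=> y /and3P[hB h1 h2]; apply/negP => /andP[_ /hasP[t _ /andP[Tt Tt']]].
    have [g [Ag gd gy]] := B2_gen hB.
    have [At h3 h4] := Tin t Tt; have [At' h5 h6] := Tin _ Tt'.
    have e : t + (4*y - t) = 2 * (2 * y) by lia.
    have g1 : g < t by lia.
    have g2 : g < 4*y - t by lia.
    have := hP t (4*y - t) g At At' Ag g1 g2.
    by rewrite e dvdn_mull.
have F2 : count (Lp n A) s + count (S6 n A) s <= count (oJL n) s.
  apply: count_disj.
  - move=> y /Lp_prop /and4P[_ h1 h2 h3]; by rewrite /oJL h1 h2 h3.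
  - by move=> y /andP[].
  - move=> y /Lp_prop /and4P[Ay oy h1 h2]; apply/negP => /andP[_ /hasP[t _ /andP[Tt Tt']]].
    have [At h3 h4] := Tin t Tt; have [At' h5 h6] := Tin _ Tt'.
    have e : t + (6*y - t) = 6 * y by lia.
    have g1 : y < t by lia.
    have g2 : y < 6*y - t by lia.
    have := hP t (6*y - t) y At At' Ay g1 g2.
    by rewrite e dvdn_mull.
set O := fun t => T t && odd t.
have eT : count T s = count O s + count (fun t => T t && ~~ odd t) s.
  exact: count_split.
have F7 : count (fun t => T t && ~~ odd t) s <= count (S4 n A) s.
  apply: (count_inj (f := fun t => t %/ 2)).
  - move=> x y /andP[_ ox] /andP[_ oy] e.
    have := modn2 x; have := modn2 y; rewrite (negbTE ox) (negbTE oy) /=; lia.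
  - move=> x /andP[Tx ox] _.
    have := modn2 x; rewrite (negbTE ox) /= => x2.
    have [_ h1 h2] := Tin x Tx.
    apply/andP; split; last lia.
    apply/andP; split; first by (apply/andP; split; lia).
    apply/hasP; exists x; first exact: memT.
    rewrite (_ : 4 * (x %/ 2) - x = x); last lia. by apply/andP.
have Oodd : forall x, O x -> x %% 2 = 1.
  by move=> x /andP[_ ox]; rewrite modn2 ox.
have [[[x1 O1x] [x3 O3x]] | hsame] :
  ((exists x, O x && (x %% 4 == 1)) /\ (exists x, O x && ~~ (x %% 4 == 1))) \/
  (forall x y, O x -> O y -> x %% 4 = y %% 4).
  case: (posnP (count (fun x => O x && (x %% 4 == 1)) s)) => c1.
    right => x y Ox Oy.
    have : ~~ has (fun x => O x && (x %% 4 == 1)) s by rewrite has_count c1.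
    move/hasPn => h.
    have := h x (memT x (andP Ox).1); have := h y (memT y (andP Oy).1).
    rewrite Ox Oy /=; have := Oodd x Ox; have := Oodd y Oy.
    move=> a b /eqP c /eqP d; lia.
  case: (posnP (count (fun x => O x && ~~ (x %% 4 == 1)) s)) => c3.
    right => x y Ox Oy.
    have : ~~ has (fun x => O x && ~~ (x %% 4 == 1)) s by rewrite has_count c3.
    move/hasPn => h.
    have := h x (memT x (andP Ox).1); have := h y (memT y (andP Oy).1).
    rewrite Ox Oy /= !negbK => /eqP c /eqP d; lia.
  left; split.
    by move: c1; rewrite -has_count => /hasP[x _ hx]; exists x.
  by move: c3; rewrite -has_count => /hasP[x _ hx]; exists x.
-
  have eO : count O s = count (fun x => O x && (x %% 4 == 1)) s + count (fun x => O x && ~~ (x %% 4 == 1)) s by apply: count_split.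
  have F8 : count (fun x => O x && (x %% 4 == 1)) s + count (fun x => O x && ~~ (x %% 4 == 1)) s
            <= (count (S4 n A) s).+1.
    apply: (sumset (d := 4)) => //.
    + by exists x1.
    + by exists x3.
    + by move=> y /andP[/andP[/Tin[_ _ h] _] _]; lia.
    + move=> x y /andP[Ox /eqP x4] /andP[Oy y4].
      have x2 := Oodd x Ox; have y2 := Oodd y Oy.
      have [Tx _] := andP Ox; have [Ty _] := andP Oy.
      have [_ h1 h2] := Tin x Tx; have [_ h3 h4] := Tin y Ty.
      move/eqP: y4 => y4.
      have d4 : 4 %| x + y by lia.
      apply/and3P; split => //; last lia.
      apply/andP; split; first by (apply/andP; split; lia).
      apply/hasP; exists x; first exact: memT.
      rewrite (_ : 4 * ((x + y) %/ 4) - x = y); last lia. by apply/andP.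
  left; apply: (arithA (JRc := count (JR n) s) F1 (boundJR n) eT F7 _ (boundT n A)); lia.
-
  set OH := fun t => O t && ~~ (4 * t <= 3 * n).
  have eO : count O s = count (fun t => O t && (4 * t <= 3 * n)) s + count OH s by apply: count_split.
  have FL := boundOL hsame.
  have Hcl : forall k, count (fun t => OH t && (t %% 3 == k)) s <= (n - ((3 * n) %/ 4 + 1)) %/ 12 + 1 := fun k => boundH k hsame.
  have eH := count_split OH (fun t => t %% 3 == 0) s.
  have eH' := count_split (fun t => OH t && ~~ (t %% 3 == 0)) (fun t => t %% 3 == 1) s.
  have H1b : count (fun t => (OH t && ~~ (t %% 3 == 0)) && (t %% 3 == 1)) s
             = count (fun t => OH t && (t %% 3 == 1)) s.
    apply: eq_count => t /=; case: (OH t) => //=; case: eqP => //= ->; by [].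
  have H2b : count (fun t => (OH t && ~~ (t %% 3 == 0)) && ~~ (t %% 3 == 1)) s
             = count (fun t => OH t && (t %% 3 == 2)) s.
    apply: eq_count => t /=; case: (OH t) => //=.
    have : t %% 3 < 3 by rewrite ltn_mod.
    case: (t %% 3) => [|[|[|k]]] //.
  have FH0 : count (fun t => OH t && (t %% 3 == 0)) s <= count (S6 n A) s.
    apply: (count_inj (f := fun t => t %/ 3)).
    + move=> x y /andP[_ /eqP x3] /andP[_ /eqP y3] e; lia.
    + move=> x /andP[/andP[/andP[Tx ox] h0] /eqP x3] _.
      have x2 : x %% 2 = 1 by rewrite modn2 ox.
      have [_ h1 h2] := Tin x Tx.
      apply/andP; split; last lia.
      apply/andP; split.
        have o3 : odd (x %/ 3).
          have h : (x %/ 3) %% 2 = 1 by lia.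
          by move: h; rewrite modn2; case: odd.
        rewrite /oJL o3 /=; apply/andP; split; lia.
      apply/hasP; exists x; first exact: memT.
      rewrite (_ : 6 * (x %/ 3) - x = x); last lia. by apply/andP.
  have [k FOH] : exists k, count OH s <= count (S6 n A) s + count (fun t => OH t && (t %% 3 == k)) s + 1.
    case: (posnP (count (fun t => OH t && (t %% 3 == 1)) s)) => p1; first by exists 2; lia.
    case: (posnP (count (fun t => OH t && (t %% 3 == 2)) s)) => p2; first by exists 1; lia.
    have : count (fun t => OH t && (t %% 3 == 1)) s + count (fun t => OH t && (t %% 3 == 2)) s
           <= (count (S6 n A) s).+1.
      apply: (sumset (d := 6)) => //.
      + by move: p1; rewrite -has_count => /hasP[x _ hx]; exists x.
      + by move: p2; rewrite -has_count => /hasP[x _ hx]; exists x.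
      + by move=> y /andP[/andP[/andP[/Tin[_ _ h] _] _] _]; lia.
      + move=> x y /andP[/andP[Ox hx] /eqP x3] /andP[/andP[Oy hy] /eqP y3].
        have x2 := Oodd x Ox; have y2 := Oodd y Oy; have xy4 := hsame x y Ox Oy.
        have [Tx _] := andP Ox; have [Ty _] := andP Oy.
        have [_ h1 h2] := Tin x Tx; have [_ h3 h4] := Tin y Ty.
        move: hx hy; rewrite -!ltnNge => hx hy.
        have d6 : 6 %| x + y by lia.
        apply/and3P; split => //; last lia.
        apply/andP; split.
          have o3 : odd ((x + y) %/ 6).
            have h : ((x + y) %/ 6) %% 2 = 1 by lia.
            by move: h; rewrite modn2; case: odd.
          rewrite /oJL o3 /=; apply/andP; split; lia.
        apply/hasP; exists x; first exact: memT.
        rewrite (_ : 6 * ((x + y) %/ 6) - x = y); last lia. by apply/andP.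
    exists 0; lia.
  rewrite eB2.
  have HH : count O s = count (fun t => O t && (4 * t <= 3 * n)) s + count OH s := eO.
  apply: (arithB (JRc := count (JR n) s) (oJ := count (oJL n) s) F1 (boundJR n) F2 (boundoJL n) eT F7 HH FL FOH (Hcl k) (boundT n A)).
Qed.
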